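(* Let $A$ be an $m\times m$ coloring matrix, let $m'\ge1$, and let $A'$ be the $(m+m')\times(m+m')$ block matrix $$A'=\left[\begin{array}{c|c}A&0\\\hline \mathbf{1}&\mathbf{1}\end{array}\right],$$ where the bottom blocks are the $m'\times m$ and $m'\times m'$ all-ones matrices and the upper right block is zero. Then $$F_{A'}(x)=F_A(x)+F_{A'}(x)^2-F_{A'}(x)F_A(x)+m'x,$$ and consequently $$F_{A'}(x)=\frac{1+F_A(x)-\sqrt{(1-F_A(x))^2-4m'x}}{2}.$$
   Context: A plane tree is an unlabeled rooted tree in which the children of every vertex are linearly ordered. A coloring matrix is a square matrix $A=(a_{ij})$ with entries in $\{0,1\}$. An $A$-coloring of a plane tree assigns to each vertex a color (an index of a row of $A$) such that whenever a vertex of color $j$ is a child of a vertex of color $i$, $a_{ij}=1$. Let $t_A(n)$ be the number of pairs (plane tree with $n$ vertices, $A$-coloring of it), and $F_A(x)=\sum_{n\ge1}t_A(n)x^n$ (formal power series; the square root is the formal power series branch with constant term $1$). *)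

(* Defs.v *)
From mathcomp Require Import all_boot all_order all_algebra.
From Stdlib Require Import ClassicalEpsilon.
Set Implicit Arguments. Unset Strict Implicit. Unset Printing Implicit Defensive.
Import GRing.Theory.
Local Open Scope ring_scope.

Definition coloring_matrix (k : nat) := 'M[bool]_k.

(* A plane tree together with a coloring of its vertices by colors 'I_k:
   each vertex carries a color and an ordered list of children. *)
Inductive ctree (k : nat) : Type := CNode of 'I_k & seq (ctree k).

Definition color k (t : ctree k) : 'I_k := let: CNode c _ := t in c.

Fixpoint csize k (t : ctree k) : nat :=
  let: CNode _ ts := t in (sumn (map (@csize k) ts)).+1.

Fixpoint Acolored k (A : coloring_matrix k) (t : ctree k) : bool :=
  let: CNode c ts := t in
  all (fun s => A c (color s) && Acolored A s) ts.

Definition is_count k (A : coloring_matrix k) (n k0 : nat) : Prop :=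
  exists s : list (ctree k),
    List.NoDup s /\ length s = k0 /\
    forall t, List.In t s <-> (Acolored A t /\ csize t = n).

Definition tA k (A : coloring_matrix k) (n : nat) : nat :=
  epsilon (inhabits 0%N) (is_count A n).

Definition fps := nat -> rat.

Definition fps_add (f g : fps) : fps := fun n => f n + g n.
Definition fps_sub (f g : fps) : fps := fun n => f n - g n.
Definition fps_mul (f g : fps) : fps :=
  fun n => \sum_(i < n.+1) f i * g (n - i)%N.
Definition fps_scale (c : rat) (f : fps) : fps := fun n => c * f n.
Definition fps_const (c : rat) : fps := fun n => if n == 0%N then c else 0.
Definition fps_X : fps := fun n => if n == 1%N then 1 else 0.

Definition FA k (A : coloring_matrix k) : fps :=
  fun n => if n == 0%N then 0 else (tA A n)%:R.

Definition extA m m' (A : coloring_matrix m) : coloring_matrix (m + m') :=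
  block_mx A (const_mx false) (const_mx true) (const_mx true).

(* Main.v *)
From Stdlib Require Import List ClassicalEpsilon.
Require Import Defs.
From mathcomp Require Import all_boot all_order all_algebra.
From mathcomp Require Import zify ring lra.
Import GRing.Theory.
Set Implicit Arguments. Unset Strict Implicit. Unset Printing Implicit Defensive.

Definition cnt {X} (P : X -> Prop) (a : nat) :=
  exists s : list X, NoDup s /\ length s = a /\ forall x, In x s <-> P x.

Lemma inj_NoDup X Y (f : X -> Y) (l : list X) : injective f -> NoDup l -> NoDup (List.map f l).
Proof. move=> fi; apply: NoDup_map_NoDup_ForallPairs => x y _ _; exact: fi. Qed.

Lemma cnt_uniq X (P : X -> Prop) a b : cnt P a -> cnt P b -> a = b.
Proof.
move=> [s [Hs [<- Hsi]]] [u [Hu [<- Hui]]].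
apply/eqP; rewrite eqn_leq; apply/andP; split; apply/leP.
- apply: NoDup_incl_length => // x /Hsi /Hui.  done.
- apply: NoDup_incl_length => // x /Hui /Hsi.  done.
Qed.

Lemma cnt_ext X (P Q : X -> Prop) a : (forall x, P x <-> Q x) -> cnt P a -> cnt Q a.
Proof.
move=> H [s [Hs [Hl Hi]]]; exists s; split => //; split => //.
move=> x; rewrite Hi; exact: H.
Qed.

Lemma cnt_filter X (P : X -> Prop) (q : X -> bool) a :
  cnt P a -> exists b, cnt (fun x => P x /\ q x) b.
Proof.
move=> [s [Hs [Hl Hi]]]; exists (length (List.filter q s)); exists (List.filter q s).
split; first exact: NoDup_filter. split => //.
by move=> x; rewrite filter_In Hi.
Qed.

Lemma cnt_map X Y (f : X -> Y) (P : X -> Prop) a : injective f ->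
  cnt P a -> cnt (fun y => exists x, P x /\ y = f x) a.
Proof.
move=> fi [s [Hs [Hl Hi]]]; exists (List.map f s); split.
  exact: inj_NoDup.
split; first by rewrite length_map.
move=> y; rewrite in_map_iff; split.
  by move=> [x [<- /Hi]]; exists x.
by move=> [x [/Hi ? ->]]; exists x.
Qed.

Lemma cnt_or X (P Q : X -> Prop) a b : cnt P a -> cnt Q b ->
  (forall x, P x -> Q x -> False) -> cnt (fun x => P x \/ Q x) (a + b).
Proof.
move=> [s [Hs [Hl Hi]]] [u [Hu [Hul Hui]]] D; exists (s ++ u); split.
  apply: NoDup_app => // x /Hi px /Hui qx; exact: D px qx.
split; first by rewrite length_app Hl Hul.
by move=> x; rewrite in_app_iff Hi Hui.
Qed.

Lemma cnt_empty X (P : X -> Prop) : (forall x, ~ P x) -> cnt P 0.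
Proof. move=> H; exists nil; split; first constructor. split => //. by move=> x; split => // /H. Qed.

Lemma cnt_single X (P : X -> Prop) y : (forall x, P x <-> x = y) -> cnt P 1.
Proof.
move=> H; exists (y :: nil); split; first by constructor => //; constructor.
split => // x; rewrite H /=; split; first by case.
by left.
Qed.

Lemma cnt_union I X (L : list I) (P : I -> X -> Prop) (a : I -> nat) :
  NoDup L -> (forall i, In i L -> cnt (P i) (a i)) ->
  (forall i j x, In i L -> In j L -> P i x -> P j x -> i = j) ->
  cnt (fun x => exists i, In i L /\ P i x) (sumn (map a L)).
Proof.
elim: L => [|i L IH] ND C D /=.
  by apply: cnt_empty => x [i [[]]].
inversion ND; subst.
have := cnt_or (C i (or_introl erefl)) (IH H2 (fun j h => C j (or_intror h))
   (fun j j' x h h' => D j j' x (or_intror h) (or_intror h'))).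
move=> H; apply: cnt_ext (H _).
  move=> x; split.
    case=> [p|[j [hj pj]]]; first by exists i; split => //; left.
    by exists j; split => //; right.
  move=> [j [[<-|hj] pj]]; [by left | by right; exists j].
move=> x pi [j [hj pj]].
have E := D i j x (or_introl erefl) (or_intror hj) pi pj.
by subst.
Qed.

Lemma cnt_union_ex I X (L : list I) (P : I -> X -> Prop) :
  NoDup L -> (forall i, In i L -> exists a, cnt (P i) a) ->
  (forall i j x, In i L -> In j L -> P i x -> P j x -> i = j) ->
  exists a, cnt (fun x => exists i, In i L /\ P i x) a.
Proof.
elim: L => [|i L IH] ND C D /=.
  by exists 0; apply: cnt_empty => x [i [[]]].
inversion ND; subst.
have [a Ca] := C i (or_introl erefl).
have [b Cb] := IH H2 (fun j h => C j (or_intror h))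
   (fun j j' x h h' => D j j' x (or_intror h) (or_intror h')).
exists (a + b).
have := cnt_or Ca Cb.
move=> H; apply: cnt_ext (H _).
  move=> x; split.
    case=> [p|[j [hj pj]]]; first by exists i; split => //; left.
    by exists j; split => //; right.
  move=> [j [[<-|hj] pj]]; [by left | by right; exists j].
move=> x pi [j [hj pj]].
have E := D i j x (or_introl erefl) (or_intror hj) pi pj.
by subst.
Qed.

Lemma cnt_prod X Y (P : X -> Prop) (Q : Y -> Prop) a b : cnt P a -> cnt Q b ->
  cnt (fun p : X * Y => P p.1 /\ Q p.2) (a * b).
Proof.
move=> [s [Hs [Hl Hi]]] [u [Hu [Hul Hui]]]; exists (list_prod s u); split.
  clear Hl Hi; elim: s Hs => [|x s IH] Hs /=; first by constructor.
  inversion Hs; subst; apply: NoDup_app.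
  - by apply: inj_NoDup => // y y' [].
  - exact: IH.
  - move=> [x' y] /in_map_iff [y' [[<- _] _]] /in_prod_iff [] //.
split; first by rewrite length_prod Hl Hul.
by move=> [x y]; rewrite in_prod_iff Hi Hui.
Qed.

Lemma InP (T : eqType) (x : T) (s : seq T) : In x s <-> x \in s.
Proof.
elim: s => [|y s IH] //=; rewrite in_cons IH; split.
  by case=> [->|->]; rewrite ?eqxx ?orbT.
by case/orP => [/eqP ->|]; [left|right].
Qed.

Lemma uniq_NoDup (T : eqType) (s : seq T) : uniq s -> NoDup s.
Proof.
elim: s => [|y s IH] /= H; first by constructor.
by case/andP: H => ys us; constructor; [move/InP; exact/negP|apply: IH].
Qed.

Definition cntof {X} (P : X -> Prop) : nat := epsilon (inhabits 0) (cnt P).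
Lemma cntofP X (P : X -> Prop) : (exists a, cnt P a) -> cnt P (cntof P).
Proof. exact: epsilon_spec. Qed.

Definition ctree_ind' k (P : ctree k -> Prop)
  (H : forall c ts, (forall t, In t ts -> P t) -> P (CNode c ts)) : forall t, P t :=
  fix F t := let: CNode c ts := t in H c ts
    ((fix G (l : seq (ctree k)) : forall t, In t l -> P t :=
       match l return forall t, In t l -> P t with
       | nil => fun t (i : In t nil) => False_ind _ i
       | u :: us => fun t i => match i with
           | or_introl e => eq_ind u P (F u) t e
           | or_intror i' => G us t i' end
       end) ts).

Lemma csize_gt0 k (t : ctree k) : 0 < csize t.
Proof. by case: t. Qed.

Section Trees.
Variables (k : nat) (A : coloring_matrix k).
Definition treeP n (t : ctree k) := Acolored A t /\ csize t = n.
Definition forestP (row : pred 'I_k) s (f : seq (ctree k)) :=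
  all (fun t => row (color t) && Acolored A t) f /\ sumn (map (@csize k) f) = s.

Lemma is_countE n a : is_count A n a <-> cnt (treeP n) a.
Proof. by []. Qed.

Lemma tA_eq n a : cnt (treeP n) a -> tA A n = a.
Proof.
move=> H; apply: (cnt_uniq _ H).
by apply: (epsilon_spec (inhabits 0) (is_count A n)); exists a.
Qed.

Lemma tree0 : cnt (treeP 0) 0.
Proof. by apply: cnt_empty => t [_ e]; have := csize_gt0 t; rewrite e. Qed.

Lemma forest0 row : cnt (forestP row 0) 1.
Proof.
apply: (cnt_single (y := [::])) => f; split.
  case: f => [|t f] //= [_ /eqP]; rewrite addn_eq0 => /andP [/eqP e _].
  by have := csize_gt0 t; rewrite e.
by move=> ->.
Qed.

Lemma tree_step n (L : seq 'I_k) (a : 'I_k -> nat) : uniq L ->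
  (forall c, c \in L -> cnt (forestP (A c) n) (a c)) ->
  cnt (fun t => treeP n.+1 t /\ color t \in L) (sumn (map a L)).
Proof.
move=> uL H.
have := @cnt_union _ _ L (fun c t => exists f, forestP (A c) n f /\ t = CNode c f) a
  (uniq_NoDup uL).
case.
- move=> c /InP cL; apply: cnt_map; last exact: H.
  by move=> f g [].
- by move=> c d t _ _ [f [_ ->]] [g [_ []]].
move=> s [ns [ls Hs]]; exists s; split => //; split => // t; rewrite Hs.
split.
  move=> [c [/InP cL [f [[fa fs] ->]]]]; split => //.
  by split => //=; rewrite fs.
case: t => c f [[/= fa [fs]] cL]; exists c; split; first exact/InP.
by exists f.
Qed.

Lemma forest_step (row : pred 'I_k) n (a b : nat -> nat) :
  (forall j, j <= n -> cnt (fun t => treeP j.+1 t /\ row (color t)) (a j)) ->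
  (forall j, j <= n -> cnt (forestP row (n - j)) (b j)) ->
  cnt (forestP row n.+1) (sumn (map (fun j => a j * b j) (iota 0 n.+1))).
Proof.
move=> Ha Hb.
have := @cnt_union _ _ (iota 0 n.+1)
  (fun j f => exists p, ((treeP j.+1 p.1 /\ row (color p.1)) /\ forestP row (n - j) p.2)
                 /\ f = p.1 :: p.2) (fun j => a j * b j)
  (uniq_NoDup (iota_uniq _ _)).
case.
- move=> j /InP; rewrite mem_iota add0n ltnS => jn.
  apply: cnt_map; last exact: cnt_prod (Ha j jn) (Hb j jn).
  by move=> [x y] [x' y'] /= [-> ->].
- move=> i j f _ _ [[x y] [[[[_ xs] _] _] ->]] [[x' y'] [[[[_ xs'] _] _] [ex ey]]] /=.
  by move: xs xs'; rewrite -ex /= => -> [].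
move=> s [ns [ls Hs]]; exists s; split => //; split => // f; rewrite Hs.
split.
  move=> [j [/InP jL [[x y] [[[[xa xs] xr] [ya ys]] ->]]]].
  move: jL; rewrite mem_iota add0n ltnS => jn.
  split; first by rewrite /= xr xa.
  by rewrite /= xs ys addSn addnC subnK.
case: f => [|t f]; first by case.
move=> /= [/andP [/andP [rt at_] af] fs].
have tp := csize_gt0 t.
exists (csize t).-1; split.
  change (In (csize t).-1 (iota 0 n.+1)); apply InP; rewrite mem_iota; move: fs => /= fs; lia.
exists (t, f); split => //=; split; first by rewrite prednK.
split => //; move: fs => /= fs; lia.
Qed.

Lemma fin_all n : (exists a, cnt (treeP n) a) /\
  forall row, exists a, cnt (forestP row n) a.
Proof.
elim: n {-2}n (leqnn n) => [|N IH] n.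
  rewrite leqn0 => /eqP ->; split; first by exists 0; exact: tree0.
  by move=> row; exists 1; exact: forest0.
rewrite leq_eqVlt => /orP [/eqP ->|]; last exact: IH.
have tr : exists a, cnt (treeP N.+1) a.
  exists (sumn (map (fun c => cntof (forestP (A c) N)) (enum 'I_k))).
  have := @tree_step N (enum 'I_k) (fun c => cntof (forestP (A c) N)) (enum_uniq _) (fun c _ => cntofP ((IH N (leqnn N)).2 (A c))).
  move=> H; apply: cnt_ext H => t; split; first by case.
  by move=> h; split => //; rewrite mem_enum.
split => // row.
eexists; apply: forest_step.
- move=> j jn; apply: cntofP.
  have [a Ha] : exists a, cnt (treeP j.+1) a.
    by move: jn; rewrite leq_eqVlt => /orP [/eqP ->|/IH []].
  exact: cnt_filter Ha.
- move=> j jn; apply: cntofP; apply: (IH _ _).2.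
  exact: leq_trans (leq_subr _ _) (leqnn _).
Qed.

End Trees.

Lemma map_ext_In' X Y (f g : X -> Y) (l : seq X) :
  (forall x, In x l -> f x = g x) -> map f l = map g l.
Proof.
elim: l => [|x l IH] H //=; rewrite H; last by left.
by rewrite IH // => y hy; apply: H; right.
Qed.

Lemma all_ext_In X (f g : pred X) (l : seq X) :
  (forall x, In x l -> f x = g x) -> all f l = all g l.
Proof.
elim: l => [|x l IH] H //=; rewrite H; last by left.
by rewrite IH // => y hy; apply: H; right.
Qed.

Lemma sumn_const X (L : seq X) x : sumn (map (fun _ => x) L) = size L * x.
Proof. by elim: L => [|y L IH] //=; rewrite IH mulSn. Qed.

Lemma tA_cnt k (A : coloring_matrix k) n : cnt (treeP A n) (tA A n).
Proof. by apply: (epsilon_spec (inhabits 0) (is_count A n)); exact: (fin_all A n).1. Qed.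

Section Ext.
Variables (m m' : nat) (A : coloring_matrix m).
Let B := extA m' A.

Lemma B_ll i j : B (lshift m' i) (lshift m' j) = A i j.
Proof. by rewrite /B /extA block_mxEul. Qed.
Lemma B_lr i j : B (lshift m' i) (rshift m j) = false.
Proof. by rewrite /B /extA block_mxEur mxE. Qed.
Lemma B_r i d : B (rshift m i) d = true.
Proof.
rewrite /B /extA -(splitK d); case: (split d) => j /=.
  by rewrite block_mxEdl mxE.
by rewrite block_mxEdr mxE.
Qed.

Lemma ord_split (d : 'I_(m + m')) : (exists i, d = lshift m' i) \/ (exists j, d = rshift m j).
Proof. rewrite -(splitK d); case: (split d) => j /=; [left|right]; by exists j. Qed.

Fixpoint relab (t : ctree m) : ctree (m + m') :=
  let: CNode c ts := t in CNode (lshift m' c) (map relab ts).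

Lemma color_relab t : color (relab t) = lshift m' (color t).
Proof. by case: t. Qed.

Lemma csize_relab t : csize (relab t) = csize t.
Proof.
elim/ctree_ind': t => c ts IH /=; rewrite -map_comp.
by congr (sumn _).+1; apply: map_ext_In' => t /IH.
Qed.

Lemma Acol_relab t : Acolored B (relab t) = Acolored A t.
Proof.
elim/ctree_ind': t => c ts IH /=; rewrite all_map.
by apply: all_ext_In => t /IH /= ->; rewrite color_relab B_ll.
Qed.

Lemma relab_inj : injective relab.
Proof.
move=> t; elim/ctree_ind': t => c ts IH [d us] /= [/ord_inj -> E]; congr CNode.
elim: ts us IH E => [|t ts IHl] [|u us] IH //= [tu E].
rewrite (IH t (or_introl erefl) u tu); congr cons.
by apply: IHl E => s h; apply: IH; right.
Qed.

Lemma relab_surj t : Acolored B t -> color t < m -> exists u, Acolored A u /\ t = relab u.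
Proof.
elim/ctree_ind': t => c ts IH /= Ha cm.
have [[i ci]|[j cj]] := ord_split c; last by move: cm; rewrite cj /= ltnNge leq_addr.
subst c.
suff [us [Hus Hm]] : exists us, all (fun u => A i (color u) && Acolored A u) us /\ ts = map relab us.
  by exists (CNode i us); split => //; rewrite Hm.
elim: ts IH Ha => [|t ts IHl] IH /=; first by exists [::].
case/andP => /andP [Bt At] Ha.
have [us [Hus ->]] := IHl (fun s h => IH s (or_intror h)) Ha.
have tm : color t < m.
  have [[d ->]|[d tc]] := ord_split (color t); first exact: ltn_ord d.
  by move: Bt; rewrite tc B_lr.
have [u [Au tu]] := IH t (or_introl erefl) At tm; subst t.
exists (u :: us); split => //=; rewrite Hus Au andbT.
rewrite andbT; move: Bt. rewrite color_relab. rewrite B_ll. by [].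
Qed.

Definition Fr s := cntof (forestP B predT s).

Lemma Fr_cnt s : cnt (forestP B predT s) (Fr s).
Proof. apply: cntofP; exact: (fin_all B s).2. Qed.

Lemma Fr0 : Fr 0 = 1.
Proof. exact: cnt_uniq (Fr_cnt 0) (forest0 _ _). Qed.

Lemma tB0 : tA B 0 = 0.
Proof. exact: tA_eq (tree0 _). Qed.

Lemma tA0 : tA A 0 = 0.
Proof. exact: tA_eq (tree0 _). Qed.

Lemma FrS s : Fr s.+1 = sumn (map (fun j => tA B j.+1 * Fr (s - j)) (iota 0 s.+1)).
Proof.
apply: cnt_uniq (Fr_cnt _) _; apply: forest_step => j _; last exact: Fr_cnt.
by apply: cnt_ext (tA_cnt _ _) => t; split => [|[]].
Qed.

Lemma tBS s : tA B s.+1 = tA A s.+1 + m' * Fr s.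
Proof.
apply: tA_eq.
pose L := map (@rshift m m') (enum 'I_m').
have uL : uniq L by rewrite map_inj_uniq ?enum_uniq //; exact: rshift_inj.
have := @tree_step _ B s L (fun _ => Fr s) uL.
rewrite sumn_const size_map size_enum_ord => H.
have {H} H : cnt (fun t => treeP B s.+1 t /\ color t \in L) (m' * Fr s).
  apply: H => c /mapP [j _ ->]; apply: cnt_ext (Fr_cnt s) => f.
  rewrite /forestP (@eq_all _ _ (fun t => predT (color t) && Acolored B t)) //.
  by move=> t /=; rewrite B_r.
have := tA_cnt A s.+1 => /(cnt_map relab_inj) H2.
have := cnt_or H2 H.
- move=> H3; apply: cnt_ext (H3 _).
  + move=> t; split.
    * case=> [[u [[Au su] ->]]|[] //].
      by split; rewrite ?Acol_relab ?csize_relab.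
    * case=> At st.
      have [[i ci]|[j cj]] := ord_split (color t).
        have cm : color t < m by rewrite ci; exact: (ltn_ord i).
        left; have [u [Au tu]] := relab_surj At cm; subst t.
        by exists u; split => //; split => //; rewrite -csize_relab.
      right; split => //; rewrite cj; apply: map_f; exact: mem_enum.
  + move=> t [u [_ ->]] [_ /mapP [j _]]; rewrite color_relab => E.
    by move: (ltn_ord (color u)); rewrite -[X in X < _]/(val (lshift m' (color u))) E /= ltnNge leq_addr.
Qed.

End Ext.

Import Num.Theory.
Local Open Scope ring_scope.

Lemma fmul_addl f g h n : fps_mul (fps_add f g) h n = fps_mul f h n + fps_mul g h n.
Proof. by rewrite /fps_mul /fps_add -big_split; apply: eq_bigr => i _; rewrite mulrDl. Qed.
Lemma fmul_subl f g h n : fps_mul (fps_sub f g) h n = fps_mul f h n - fps_mul g h n.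
Proof. by rewrite /fps_mul /fps_sub -sumrB; apply: eq_bigr => i _; rewrite mulrBl. Qed.
Lemma fmul_scalel c f g n : fps_mul (fps_scale c f) g n = c * fps_mul f g n.
Proof. by rewrite /fps_mul /fps_scale mulr_sumr; apply: eq_bigr => i _; rewrite mulrA. Qed.
Lemma fmul_constl c f n : fps_mul (fps_const c) f n = c * f n.
Proof.
rewrite /fps_mul big_ord_recl /= subn0 big1 ?addr0 // => i _.
by rewrite /fps_const /= mul0r.
Qed.
Lemma fmulC f g n : fps_mul f g n = fps_mul g f n.
Proof.
rewrite /fps_mul (reindex_inj rev_ord_inj); apply: eq_bigr => i _.
have hi : (i <= n)%N by rewrite -ltnS; exact: ltn_ord.
have -> : nat_of_ord (rev_ord i) = (n - i)%N by rewrite /= subSS.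
by rewrite subKn // mulrC.
Qed.
Lemma fmul_addr f g h n : fps_mul h (fps_add f g) n = fps_mul h f n + fps_mul h g n.
Proof. by rewrite fmulC fmul_addl !(fmulC h). Qed.
Lemma fmul_subr f g h n : fps_mul h (fps_sub f g) n = fps_mul h f n - fps_mul h g n.
Proof. by rewrite fmulC fmul_subl !(fmulC h). Qed.
Lemma fmul_scaler c f g n : fps_mul g (fps_scale c f) n = c * fps_mul g f n.
Proof. by rewrite fmulC fmul_scalel fmulC. Qed.
Lemma fmul_constr c f n : fps_mul f (fps_const c) n = c * f n.
Proof. by rewrite fmulC fmul_constl. Qed.

Lemma sq_coef (S : fps) s : fps_mul S S s.+1 =
  2 * S 0%N * S s.+1 + \sum_(i < s) S i.+1 * S (s - i)%N.
Proof.
rewrite /fps_mul big_ord_recl big_ord_recr.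
rewrite (eq_bigr (fun i : 'I_s => S i.+1 * S (s - i)%N)); last first.
  by move=> i _; congr (S _ * S _).
have -> : nat_of_ord (lift ord0 (@ord_max s)) = s.+1 by [].
have -> : nat_of_ord (@ord0 s.+1) = 0%N by [].
rewrite subnn subn0.
set M := \sum_(i < s) _.
rewrite -[_ + _]/(S 0%N * S s.+1 + (M + S s.+1 * S 0%N)).
ring.
Qed.

Lemma sqrt_uniq (S T : fps) : S 0%N = 1 -> T 0%N = 1 ->
  (forall n, fps_mul S S n = fps_mul T T n) -> forall n, S n = T n.
Proof.
move=> S0 T0 H n; elim/ltn_ind: n => -[|s] IH; first by rewrite S0 T0.
have := H s.+1; rewrite !sq_coef S0 T0.
rewrite (eq_bigr (fun i : 'I_s => T i.+1 * T (s - i)%N)); last first.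
  move=> i _.
  have h1 : (i.+1 < s.+1)%N by rewrite ltnS; exact: ltn_ord.
  have h2 : (s - i < s.+1)%N by rewrite ltnS leq_subr.
  by rewrite (IH _ h1) (IH _ h2).
move=> E; lra.
Qed.

Lemma sumn_iota (f : nat -> nat) N : sumn (map f (iota 0 N)) = (\sum_(i < N) f i)%N.
Proof. by rewrite sumnE big_map -(big_mkord xpredT f) /index_iota subn0. Qed.

Lemma FAE k (A0 : coloring_matrix k) n : FA A0 n = (tA A0 n)%:R.
Proof. by case: n => [|n] //; rewrite /FA (tA_eq (tree0 A0)). Qed.

Unset Implicit Arguments.
Theorem theorem26 (m m' : nat) (A : coloring_matrix m) :
  (1 <= m')%N ->
  let F := FA A in
  let F' := FA (extA m' A) in
  (forall n, F' n =
     fps_add (fps_sub (fps_add F (fps_mul F' F')) (fps_mul F' F))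
             (fps_scale m'%:R fps_X) n) /\
  (let D := fps_sub (fps_mul (fps_sub (fps_const 1) F) (fps_sub (fps_const 1) F))
                    (fps_scale (4 * m'%:R) fps_X) in
   (exists S : fps, S 0%N = 1 /\ forall n, fps_mul S S n = D n) /\
   forall S : fps, S 0%N = 1 -> (forall n, fps_mul S S n = D n) ->
     forall n, F' n = fps_scale (1 / 2) (fps_sub (fps_add (fps_const 1) F) S) n).
Proof.
move=> _ F F'.
pose Phi s : rat := (Fr m' A s)%:R.
pose G n : rat := if n is s.+1 then m'%:R * Phi s else 0.
have L1 : forall n, F' n = F n + G n.
  case=> [|s]; rewrite /F /F' !FAE.
    by rewrite tB0 tA0 addr0.
  by rewrite tBS natrD natrM.
have F'0 : F' 0%N = 0 by [].
have F0 : F 0%N = 0 by [].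
have PhiS : forall s, Phi s.+1 = \sum_(j < s.+1) F' j.+1 * Phi (s - j)%N.
  move=> s; rewrite /Phi FrS sumn_iota natr_sum; apply: eq_bigr => j _.
  by rewrite natrM /F' FAE.
have Phi0 : Phi 0%N = 1 by rewrite /Phi Fr0.
have L2 : forall n, G n = \sum_(i < n.+1) F' i * G (n - i)%N +
                          (if n == 1%N then m'%:R else 0).
  case=> [|s].
    by rewrite big_ord_recl big_ord0 F'0 /= mul0r !addr0.
  rewrite big_ord_recr.
  have -> : nat_of_ord (@ord_max s.+1) = s.+1 by [].
  rewrite subnn (_ : G 0%N = 0) // mulr0 Monoid.mulm1 big_ord_recl F'0 mul0r Monoid.mul1m.
  rewrite (eq_bigr (fun i : 'I_s => F' i.+1 * G (s - i)%N)); last first.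
    by move=> i _; congr (F' _ * G _).
  case: s => [|s].
    by rewrite big_ord0 add0r /= Phi0 mulr1.
  rewrite [G _]/= PhiS mulr_sumr [(_ == _)]/= addr0; apply: eq_bigr => i _.
  have -> : (s.+1 - i = (s - i).+1)%N by rewrite subSn // -ltnS.
  by rewrite [G _]/= mulrCA.
have P1 : forall n, F' n =
     fps_add (fps_sub (fps_add F (fps_mul F' F')) (fps_mul F' F))
             (fps_scale m'%:R fps_X) n.
  move=> n; rewrite /fps_add /fps_sub /fps_scale /fps_X.
  have E2 : fps_mul F' F' n - fps_mul F' F n = \sum_(i < n.+1) F' i * G (n - i)%N.
    rewrite /fps_mul -sumrB; apply: eq_bigr => i _.
    by rewrite -mulrBr (L1 (n - i)%N) addrAC subrr add0r.
  have E1 := L1 n; have E3 := L2 n.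
  case: (n == 1%N) E3 => E3; lra.
split => //.
move=> D.
pose T : fps := fps_sub (fps_add (fps_const 1) F) (fps_scale 2 F').
have T0 : T 0%N = 1.
  by rewrite /T /fps_sub /fps_add /fps_scale F0 F'0 /fps_const eqxx; lra.
have TT : forall n, fps_mul T T n = D n.
  move=> n.
  have -> : D n = fps_mul (fps_sub (fps_const 1) F) (fps_sub (fps_const 1) F) n
     - 4 * m'%:R * fps_X n by [].
  rewrite /T.
  do 4 rewrite ?fmul_subl ?fmul_addl ?fmul_subr ?fmul_addr ?fmul_scalel ?fmul_scaler
            ?fmul_constl ?fmul_constr.
  rewrite (fmulC F F' n).
  have E := P1 n.
  move: E; rewrite /fps_sub /fps_add /fps_scale /fps_X /fps_const.
  case: (n == 1%N); case: (n == 0%N) => E; lra.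
split; first by exists T.
move=> S S0 HS n.
have := sqrt_uniq S0 T0 (fun n => etrans (HS n) (esym (TT n))) n.
rewrite /T /fps_scale /fps_sub /fps_add => ->; lra.
Qed.
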